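(* (1) Let $C\otimes\mathbb Q=\{t^r\mid r\in\mathbb Q\}$ denote the additive group $\mathbb Q$ written multiplicatively. Make $\mathbb Q[\![x]\!]$ a $C\otimes\mathbb Q$-module by letting $t^r$ act as multiplication by $(1+x)^r=\sum_{n\ge 0}\binom{r}{n}x^n$, where $\binom{r}{n}=r(r-1)\cdots(r-n+1)/n!$. Let $\Lambda^2(\mathbb Q[\![x]\!])$ be the exterior square over $\mathbb Q$ with the diagonal action $t^r(f\wedge g)=(1+x)^rf\wedge(1+x)^rg$, and let $(\Lambda^2(\mathbb Q[\![x]\!]))_{C\otimes\mathbb Q}$ be its module of coinvariants. Then the kernel of the $\mathbb Q$-linear map $\theta_{\mathbb Q}:\mathbb Q[\![x]\!]\to(\Lambda^2(\mathbb Q[\![x]\!]))_{C\otimes\mathbb Q}$, $\theta_{\mathbb Q}(f)=f\wedge 1$, is countable. (2) Let $p$ be an odd prime and $C=\langle t\rangle$ the infinite cyclic group. Make $\mathbb Z/p[\![x]\!]$ a $C$-module by letting $t$ act as multiplication by $1+x$. Let $\Lambda^2(\mathbb Z/p[\![x]\!])$ be the exterior square over $\mathbb Z/p$ with the diagonal action of $C$, and $(\Lambda^2(\mathbb Z/p[\![x]\!]))_C$ its coinvariants. Then the kernel of the map $\theta_{\mathbb Z/p}:\mathbb Z/p[\![x]\!]\to(\Lambda^2(\mathbb Z/p[\![x]\!]))_C$, $\theta_{\mathbb Z/p}(f)=f\wedge 1$, is countable.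
   Context: For a group $H$ acting on a module $M$, the coinvariants $M_H$ are the quotient of $M$ by the subgroup generated by $hm-m$, $h\in H$, $m\in M$. *)

(* Defs.v *)
From HB Require Import structures.
From mathcomp Require Import all_boot all_order all_algebra.
From mathcomp Require Import boolp classical_sets cardinality.
Set Implicit Arguments. Unset Strict Implicit. Unset Printing Implicit Defensive.
Import Order.TTheory GRing.Theory Num.Theory.
Local Open Scope ring_scope.

Section PowerSeries.
Variable K : fieldType.

Definition ps := nat -> K.
Definition ps_add (f g : ps) : ps := fun n => f n + g n.
Definition ps_scale (c : K) (f : ps) : ps := fun n => c * f n.
Definition ps_mul (f g : ps) : ps := fun n => \sum_(i < n.+1) f i * g (n - i)%N.
Definition ps_one : ps := fun n => if n is 0 then 1 else 0.
Definition ps_onepx : ps := fun n => if (n <= 1)%N then 1 else 0.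
Definition ps_onepx_inv : ps := fun n => (-1) ^+ n.
Definition ps_pow_int (k : int) : ps :=
  match k with
  | Posz n => iter n (ps_mul ps_onepx) ps_one
  | Negz n => iter n.+1 (ps_mul ps_onepx_inv) ps_one
  end.

(* Free K-vector space on the set K[[x]] x K[[x]] (finitely supported
   functions; only finite combinations of basis vectors are ever formed). *)
Definition fv := ps * ps -> K.
Definition fv_delta (a b : ps) : fv :=
  fun z => if pselect (z = (a, b)) then 1 else 0.
Definition fv_sub (v w : fv) : fv := fun z => v z - w z.

Inductive in_span (P : fv -> Prop) : fv -> Prop :=
| span0 : in_span P (fun _ => 0)
| span_step (c : K) (v w : fv) :
    P v -> in_span P w -> in_span P (fun z => c * v z + w z).

(* Relations defining Lambda^2_K(K[[x]]) as a quotient of fv (bilinearity and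
   a /\ a = 0), together with the coinvariance relations
   h.(a /\ b) - a /\ b = (u a) /\ (u b) - a /\ b for the group elements h,
   which act by multiplication by the series u in the set U. *)
Definition coinv_ext2_rel (U : set ps) (v : fv) : Prop :=
  (exists a a' b : ps, v = fv_sub (fv_sub (fv_delta (ps_add a a') b)
                                          (fv_delta a b)) (fv_delta a' b))
  \/ (exists a b b' : ps, v = fv_sub (fv_sub (fv_delta a (ps_add b b'))
                                          (fv_delta a b)) (fv_delta a b'))
  \/ (exists (c : K) (a b : ps),
        v = fv_sub (fv_delta (ps_scale c a) b) (fun z => c * fv_delta a b z))
  \/ (exists (c : K) (a b : ps),
        v = fv_sub (fv_delta a (ps_scale c b)) (fun z => c * fv_delta a b z))
  \/ (exists a : ps, v = fv_delta a a)
  \/ (exists u a b : ps, U u /\ v = fv_sub (fv_delta (ps_mul u a) (ps_mul u b))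
                                            (fv_delta a b)).

(* Kernel of theta : K[[x]] -> (Lambda^2 K[[x]])_G, f |-> class of f /\ 1,
   where G acts through the multiplications by the series in U. *)
Definition theta_ker (U : set ps) : set ps :=
  [set f | in_span (coinv_ext2_rel U) (fv_delta f ps_one)].

End PowerSeries.

Definition binom_rat (r : rat) (n : nat) : rat :=
  (\prod_(i < n) (r - i%:R)) / (n`!)%:R.
Definition onepx_rat (r : rat) : ps rat := fun n => binom_rat r n.

(* Main.v *)
Require Import Defs.
From HB Require Import structures.
From mathcomp Require Import all_boot all_order all_algebra.
From mathcomp Require Import boolp classical_sets cardinality.
From mathcomp Require Import generic_quotient.
From mathcomp Require Import zify ring.
Set Implicit Arguments. Unset Strict Implicit. Unset Printing Implicit Defensive.
Import Order.TTheory GRing.Theory Num.Theory.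
Local Open Scope ring_scope.

Definition pst (K : fieldType) : Type := ps K.
HB.instance Definition _ (K : fieldType) := gen_eqMixin (pst K).
HB.instance Definition _ (K : fieldType) := gen_choiceMixin (pst K).

Section PS.
Variable K : fieldType.
Local Notation P := (pst K).

Definition ps0 : P := fun _ => 0.
Definition psopp (f : P) : P := fun n => - f n.
Definition psadd (f g : P) : P := ps_add f g.

Lemma psaddA : associative psadd.
Proof. by move=> f g h; apply: funext => n; rewrite /psadd /ps_add addrA. Qed.
Lemma psaddC : commutative psadd.
Proof. by move=> f g; apply: funext => n; rewrite /psadd /ps_add addrC. Qed.
Lemma psadd0 : left_id ps0 psadd.
Proof. by move=> f; apply: funext => n; rewrite /psadd /ps_add add0r. Qed.
Lemma psaddN : left_inverse ps0 psopp psadd.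
Proof. by move=> f; apply: funext => n; rewrite /psadd /ps_add addNr. Qed.

HB.instance Definition _ := GRing.isZmodule.Build P psaddA psaddC psadd0 psaddN.

Definition tp (n : nat) (f : P) : {poly K} := \poly_(i < n.+1) f i.

Lemma mulE m n (f g : P) : (n <= m)%N -> ps_mul f g n = (tp m f * tp m g)`_n.
Proof.
move=> nm; rewrite coefM /ps_mul; apply: eq_bigr => i _.
rewrite !coef_poly; have hi := ltn_ord i.
by rewrite ifT ?ifT //; lia.
Qed.

Lemma coefM_agreel (p p' q : {poly K}) n :
  (forall i, (i <= n)%N -> p`_i = p'`_i) -> (p * q)`_n = (p' * q)`_n.
Proof.
move=> h; rewrite !coefM; apply: eq_bigr => i _; rewrite h //.
by rewrite -ltnS.
Qed.

Lemma tpM n (f g : P) (i : nat) : (i <= n)%N ->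
  (tp n (ps_mul f g))`_i = (tp n f * tp n g)`_i.
Proof. by move=> hi; rewrite coef_poly ltnS hi (mulE _ _ hi). Qed.

Definition psmul (f g : P) : P := ps_mul f g.

Lemma psmulA : associative psmul.
Proof.
move=> f g h; apply: funext => n; rewrite /psmul.
rewrite (mulE f _ (leqnn n)) (mulE (ps_mul f g) _ (leqnn n)).
rewrite (@coefM_agreel (tp n (ps_mul f g)) (tp n f * tp n g)); last first.
  by move=> i hi; rewrite tpM.
rewrite [tp n f * _]mulrC.
rewrite (@coefM_agreel (tp n (ps_mul g h)) (tp n g * tp n h)); last first.
  by move=> i hi; rewrite tpM.
by rewrite mulrC mulrA.
Qed.

Lemma psmulC : commutative psmul.
Proof.
by move=> f g; apply: funext => n; rewrite /psmul !(mulE _ _ (leqnn n)) mulrC.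
Qed.

Lemma psmul1 : left_id (ps_one K) psmul.
Proof.
move=> f; apply: funext => n; rewrite /psmul /ps_mul big_ord_recl /= mul1r subn0.
by rewrite big1 ?addr0 // => i _; rewrite mul0r.
Qed.

Lemma psmulDl : left_distributive psmul psadd.
Proof.
move=> f g h; apply: funext => n; rewrite /psmul /psadd /ps_add /ps_mul -big_split /=.
by apply: eq_bigr => i _; rewrite mulrDl.
Qed.

Lemma psone_neq0 : ps_one K != ps0.
Proof.
apply/eqP => /(congr1 (fun f => f 0%N)) /= /eqP; by rewrite oner_eq0.
Qed.

HB.instance Definition _ := GRing.Zmodule_isComNzRing.Build P psmulA psmulC psmul1 psmulDl psone_neq0.

Lemma psE_add (f g : P) : ps_add f g = f + g. Proof. by []. Qed.
Lemma psE_mul (f g : P) : ps_mul f g = f * g. Proof. by []. Qed.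
Lemma psE_one : ps_one K = (1 : P). Proof. by []. Qed.
Lemma pscD (f g : P) n : (f + g) n = f n + g n. Proof. by []. Qed.
Lemma pscN (f : P) n : (- f) n = - f n. Proof. by []. Qed.
Lemma psc0 n : (0 : P) n = 0. Proof. by []. Qed.

End PS.


Section PS2.
Variable K : fieldType.
Local Notation P := (pst K).

Definition cst (c : K) : P := fun n => if n is 0 then c else 0.

Lemma cst_is_zmod : zmod_morphism cst.
Proof. by move=> a b; apply: funext => n; rewrite pscD pscN; case: n => [|n] //=; rewrite subrr. Qed.
HB.instance Definition _ := GRing.isZmodMorphism.Build K P cst cst_is_zmod.

Lemma coefMl (f g : P) n : (f * g) n = \sum_(i < n.+1) f i * g (n - i)%N.
Proof. by []. Qed.

Lemma coef_cstM c (f : P) n : (cst c * f) n = c * f n.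
Proof.
rewrite coefMl big_ord_recl /= subn0 big1 ?addr0 // => i _.
by rewrite /cst mul0r.
Qed.

Lemma cst_is_mul : multiplicative cst.
Proof.
split; last by [].
move=> a b; apply: funext => n; rewrite coef_cstM.
by case: n => [|n] //=; rewrite mulr0.
Qed.
HB.instance Definition _ := GRing.isMultiplicative.Build K P cst cst_is_mul.

Lemma scaleE c (f : P) : ps_scale c f = cst c * f.
Proof. by apply: funext => n; rewrite coef_cstM. Qed.

Definition ev (t : P) (A : {poly K}) : P := (map_poly cst A).[t].

Lemma evD t A B : ev t (A + B) = ev t A + ev t B.
Proof. by rewrite /ev rmorphD hornerD. Qed.
Lemma evM t A B : ev t (A * B) = ev t A * ev t B.
Proof. by rewrite /ev rmorphM hornerM. Qed.
Lemma evN t A : ev t (- A) = - ev t A.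
Proof. by rewrite /ev rmorphN hornerN. Qed.
Lemma evC t c : ev t c%:P = cst c.
Proof. by rewrite /ev map_polyC hornerC. Qed.
Lemma ev1 t : ev t 1 = 1.
Proof. by rewrite /ev rmorph1 hornerC. Qed.
Lemma ev0 t : ev t 0 = 0.
Proof. by rewrite /ev rmorph0 horner0. Qed.
Lemma evX t : ev t 'X = t.
Proof. by rewrite /ev map_polyX hornerX. Qed.
Lemma evXn t n : ev t ('X^n) = t ^+ n.
Proof. by rewrite /ev map_polyXn hornerXn. Qed.

Lemma sum_coef I (r : seq I) (Q : pred I) (F : I -> P) n :
  (\sum_(i <- r | Q i) F i) n = \sum_(i <- r | Q i) F i n.
Proof.
by elim/big_rec2: _ => // i y1 y2 _ <-.
Qed.

Lemma val_mul (f g : P) a b :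
  (forall j, (j < a)%N -> f j = 0) -> (forall j, (j < b)%N -> g j = 0) ->
  (forall n, (n < a + b)%N -> (f * g) n = 0) /\ (f * g) (a + b)%N = f a * g b.
Proof.
move=> hf hg; split.
  move=> n hn; rewrite coefMl.
apply: big1 => i _.
  have [ia|ia] := ltnP i a; first by rewrite hf ?mul0r.
  by rewrite hg ?mulr0 //; have := ltn_ord i; lia.
have ha : (a < (a + b).+1)%N by lia.
rewrite coefMl (bigD1 (Ordinal ha)) //=.
rewrite big1 ?addr0; first by rewrite addKn.
move=> i /eqP hi; have [ia|ia] := ltnP i a; first by rewrite hf ?mul0r.
rewrite hg ?mulr0 //.
have : nat_of_ord i <> a by move=> h; apply: hi; apply: val_inj.
have := ltn_ord i; lia.
Qed.

Lemma ps_neq0_min (f : P) : f != 0 ->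
  exists a, f a != 0 /\ (forall j, (j < a)%N -> f j = 0).
Proof.
move=> hf.
have ex : exists n, f n != 0.
  apply: contra_notP (negP hf) => h; apply/eqP; apply: funext => n.
  by apply/eqP; apply: contra_notT h => h; exists n.
case: (ex_minnP ex) => a ha hmin; exists a; split => // j hj.
by apply/eqP; apply: contraTT hj => hj; rewrite -leqNgt hmin.
Qed.

Lemma ps_mul_neq0 (f g : P) : f != 0 -> g != 0 -> f * g != 0.
Proof.
move=> /ps_neq0_min [a [fa hf]] /ps_neq0_min [b [gb hg]].
have [_ h] := val_mul hf hg.
apply/eqP => /(congr1 (fun h => h (a + b)%N)); rewrite h => /eqP.
by rewrite mulf_eq0 (negbTE fa) (negbTE gb).
Qed.

Lemma ps_mulI (f g h : P) : f != 0 -> f * g = f * h -> g = h.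
Proof.
move=> hf e; apply/eqP; rewrite -subr_eq0; apply: contraT => hgh.
have := ps_mul_neq0 hf hgh; by rewrite mulrBr e subrr eqxx.
Qed.

Lemma val_exp (y : P) i : y 0%N = 0 ->
  (forall n, (n < i)%N -> (y ^+ i) n = 0) /\ (y ^+ i) i = y 1%N ^+ i.
Proof.
move=> y0; elim: i => [|i [IH1 IH2]]; first by split => //.
have hy : forall j, (j < 1)%N -> y j = 0 by move=> [|j] // _.
have [h1 h2] := val_mul hy IH1.
rewrite add1n in h1 h2.
by rewrite exprS; split; [exact: h1 | rewrite h2 IH2 exprS].
Qed.

Lemma transc_aux (y : P) (B : {poly K}) : y 0%N = 0 -> y 1%N != 0 -> B != 0 ->
  (map_poly cst B).[y] != 0.
Proof.
move=> y0 y1 hB.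
have ex : exists k, B`_k != 0.
  apply: contra_notP (negP hB) => h; apply/eqP/polyP => k; rewrite coef0.
  by apply/eqP; apply: contra_notT h => h; exists k.
case: (ex_minnP ex) => k hk hmin.
have cst_neq0 : forall c, c != 0 -> cst c != 0.
  by move=> c hc; apply/eqP => /(congr1 (fun h => h 0%N)) /= /eqP; rewrite (negbTE hc).
have hks : (k < size B)%N.
  by rewrite ltnNge; apply: contra hk => hs; rewrite nth_default.
apply/eqP => /(congr1 (fun h => h k)) /eqP.
rewrite horner_coef size_map_poly_id0; last by apply: cst_neq0; rewrite lead_coef_eq0.
rewrite sum_coef (bigD1 (Ordinal hks)) //= big1 ?addr0.
  rewrite coef_map coef_cstM (val_exp k y0).2 /= mulf_eq0 (negbTE hk) /=.
  by rewrite expf_eq0 (negbTE y1) andbF.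
move=> i /eqP hi; rewrite coef_map coef_cstM.
have hik : nat_of_ord i <> k by move=> h; apply: hi; apply: val_inj.
have [ik|ik] := ltnP i k.
  have : B`_i == 0 by apply: contraTT ik => h; rewrite -leqNgt hmin.
  by move/eqP => ->; rewrite mul0r.
by rewrite (val_exp i y0).1 ?mulr0 //; lia.
Qed.

Lemma transc (t : P) (A : {poly K}) : t 0%N = 1 -> t 1%N != 0 -> A != 0 -> ev t A != 0.
Proof.
move=> t0 t1 hA.
pose B := A \Po ('X + 1).
have hAB : A = B \Po ('X - 1).
  by rewrite /B -comp_polyA comp_polyD comp_polyX comp_polyC addrNK comp_polyXr.
have hB : B != 0 by apply: contra hA => /eqP hB; rewrite hAB hB comp_poly0.
rewrite /ev hAB map_comp_poly horner_comp rmorphB /= map_polyX map_polyC /= hornerD hornerX hornerN hornerC.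
apply: transc_aux => //.
  by rewrite pscD pscN t0 /= subrr.
by rewrite pscD pscN /= subr0.
Qed.

End PS2.


Lemma fdec (R : idomainType) (x : {fraction R}) :
  exists a b : R, b != 0 /\ x * tofrac b = tofrac a.
Proof.
elim/quotW: x => r; exists (\n_r), (\d_r); split; first exact: denom_ratioP.
rewrite !piE; apply/eqmodP; rewrite /= FracField.equivfE /FracField.mulf /=.
rewrite !numden_Ratio ?oner_neq0 ?mulf_neq0 ?denom_ratioP ?oner_neq0 //.
by rewrite !mulr1 mulrC.
Qed.

Section Core.
Variable K : fieldType.
Local Notation P := (pst K).
Local Notation F := {fraction {poly K}}.
Local Notation "x %:F" := (@tofrac _ x) (format "x %:F").

Definition IND (t g1 g2 : P) :=
  forall A B : {poly K}, ev t A * g1 + ev t B * g2 = 0 -> A = 0 /\ B = 0.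

Definition Lvalid (t : P) (L : seq ({poly K} * P)) :=
  \sum_(x <- L) ev t x.1 * x.2 = 0.

Lemma ev_sum (t : P) I (r : seq I) (Q : pred I) (E : I -> {poly K}) :
  ev t (\sum_(i <- r | Q i) E i) = \sum_(i <- r | Q i) ev t (E i).
Proof. by elim/big_rec2: _ => [|i y1 y2 _ <-]; rewrite ?ev0 ?evD. Qed.

Lemma ev_nat (t : P) n : ev t n%:R = n%:R.
Proof. by rewrite -polyC_natr evC rmorph_nat. Qed.

Section Exist.
Variables (t : P) (G : seq P).
Local Notation m := (size G).

Definition evec (g : P) : 'rV[F]_m := \row_(j < m) ((nat_of_ord j == index g G)%:R).
Definition vecL (L : seq ({poly K} * P)) : 'rV[F]_m := \sum_(x <- L) x.1%:F *: evec x.2.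

Definition W0 (r : 'rV[F]_m) : Prop := exists D : {poly K}, D != 0 /\
  exists p : 'I_m -> {poly K}, (forall j, D%:F * r 0 j = (p j)%:F) /\
     \sum_j ev t (p j) * G`_j = 0.

Lemma W0_0 : W0 0.
Proof.
exists 1; split; first exact: oner_neq0.
exists (fun _ => 0); split; first by move=> j; rewrite mxE mulr0 rmorph0.
by rewrite big1 // => j _; rewrite ev0 mul0r.
Qed.

Lemma W0_add r1 r2 : W0 r1 -> W0 r2 -> W0 (r1 + r2).
Proof.
move=> [D1 [hD1 [p1 [h1 e1]]]] [D2 [hD2 [p2 [h2 e2]]]].
exists (D1 * D2); split; first by rewrite mulf_neq0.
exists (fun j => D2 * p1 j + D1 * p2 j); split.
  move=> j; rewrite mxE rmorphD !rmorphM /= -h1 -h2; ring.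
rewrite (eq_bigr (fun j => ev t D2 * (ev t (p1 j) * G`_j) + ev t D1 * (ev t (p2 j) * G`_j))).
  by rewrite big_split /= -!mulr_sumr e1 e2 !mulr0 addr0.
by move=> j _; rewrite evD !evM; ring.
Qed.

Lemma W0_scale (c : F) r : W0 r -> W0 (c *: r).
Proof.
move=> [D [hD [p [h e]]]]; have [a [b [hb hc]]] := fdec c.
exists (D * b); split; first by rewrite mulf_neq0.
exists (fun j => a * p j); split.
  move=> j; rewrite mxE !rmorphM /= -hc -h; ring.
rewrite (eq_bigr (fun j => ev t a * (ev t (p j) * G`_j))).
  by rewrite -mulr_sumr e mulr0.
by move=> j _; rewrite evM; ring.
Qed.

Lemma W0_sum I (r : seq I) (Q : pred I) (E : I -> 'rV[F]_m) :
  (forall i, Q i -> W0 (E i)) -> W0 (\sum_(i <- r | Q i) E i).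
Proof.
move=> h; elim/big_rec: _ => [|i x Qi hx]; first exact: W0_0.
by apply: W0_add => //; apply: h.
Qed.

Lemma vecL_entry L j : vecL L 0 j = \sum_(x <- L) x.1%:F * ((nat_of_ord j == index x.2 G)%:R).
Proof.
rewrite /vecL summxE; apply: eq_bigr => x _; by rewrite !mxE.
Qed.

Lemma W0_vecL L : Lvalid t L -> (forall x, x \in L -> x.2 \in G) -> W0 (vecL L).
Proof.
move=> hv hG; exists 1; split; first exact: oner_neq0.
exists (fun j : 'I_m => \sum_(x <- L) x.1 * (nat_of_ord j == index x.2 G)%:R); split.
  move=> j; rewrite vecL_entry rmorph1 mul1r rmorph_sum; apply: eq_bigr => x _.
  by rewrite rmorphM rmorph_nat.
rewrite (eq_bigr (fun j : 'I_m => \sum_(x <- L) ev t x.1 * ((nat_of_ord j == index x.2 G)%:R * G`_j))); last first.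
  move=> j _; rewrite ev_sum mulr_suml; apply: eq_bigr => x _.
  by rewrite evM ev_nat mulrA.
rewrite exchange_big /=.
rewrite big_seq_cond [X in _ = X](_ : 0 = \sum_(x <- L | (x \in L) && true) ev t x.1 * x.2); last first.
  by rewrite -big_seq_cond.
apply: eq_bigr => x /andP [hx _].
have hi : (index x.2 G < m)%N by rewrite index_mem hG.
rewrite -mulr_sumr (bigD1 (Ordinal hi)) //= eqxx mul1r big1 ?addr0.
  by rewrite nth_index ?hG.
move=> j /eqP hj; have : nat_of_ord j != index x.2 G.
  by apply/eqP => h; apply: hj; apply: val_inj.
by move/negbTE => ->; rewrite mul0r.
Qed.


Lemma W0_contra (g1 g2 : P) (beta : F) : g1 \in G -> g2 \in G -> IND t g1 g2 ->
  ~ W0 (evec g2 - beta *: evec g1).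
Proof.
move=> h1 h2 hI [D [hD [p [hp e]]]].
have hne : g1 != g2.
  apply/eqP => h; subst g2.
  have := hI 1 (-1); rewrite ev1 evN ev1 mul1r mulN1r subrr => /(_ erefl) [h _].
  by move/eqP: h; rewrite oner_eq0.
have i1m : (index g1 G < m)%N by rewrite index_mem.
have i2m : (index g2 G < m)%N by rewrite index_mem.
pose i1 := Ordinal i1m; pose i2 := Ordinal i2m.
have i12 : i1 != i2.
  apply/eqP => /(congr1 val) /= h; move/eqP: hne; apply.
  by rewrite -(nth_index 0 h1) h nth_index.
have hpj : forall j, j != i1 -> j != i2 -> p j = 0.
  move=> j hj1 hj2; apply/eqP; rewrite -tofrac_eq0 -hp !mxE.
  have -> : (nat_of_ord j == index g2 G) = false.
    by apply/negbTE; apply: contra hj2 => /eqP h; apply/eqP/val_inj.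
  have -> : (nat_of_ord j == index g1 G) = false.
    by apply/negbTE; apply: contra hj1 => /eqP h; apply/eqP/val_inj.
  by rewrite !mulr0 subr0 mulr0.
have hp2 : p i2 = D.
  apply/eqP; rewrite -tofrac_eq -hp !mxE /= eqxx.
  have -> : (index g2 G == index g1 G) = false.
    by apply/negbTE; apply: contra i12 => /eqP h; apply/eqP/val_inj.
  by rewrite mulr0 subr0 mulr1.
rewrite (bigD1 i1) // (bigD1 i2) /= in e; last by rewrite eq_sym.
rewrite big1 ?addr0 in e; last first.
  by move=> j /andP [hj2 hj1]; rewrite hpj ?ev0 ?mul0r.
rewrite !nth_index // hp2 in e.
by have [_ /eqP] := hI _ _ e; rewrite (negbTE hD).
Qed.

Lemma exist_lam (Rs : seq (seq ({poly K} * P))) (g1 g2 : P) :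
  g1 \in G -> g2 \in G ->
  (forall L, L \in Rs -> Lvalid t L /\ forall x, x \in L -> x.2 \in G) ->
  IND t g1 g2 ->
  exists lam : P -> F, (forall L, L \in Rs -> \sum_(x <- L) (x.1)%:F * lam x.2 = 0)
     /\ lam g1 = 0 /\ lam g2 = 1.
Proof.
move=> h1 h2 hR hI.
pose Wm := \matrix_(j < size Rs) vecL (nth [::] Rs j).
pose Bm := col_mx Wm (evec g1).
have nsub : ~~ (evec g2 <= Bm)%MS.
  apply/negP => /submxP [D hD].
  rewrite -[D]hsubmxK mul_row_col in hD.
  set beta := rsubmx D 0 0.
  have e1 : rsubmx D *m evec g1 = beta *: evec g1.
    by rewrite [rsubmx D]mx11_scalar mul_scalar_mx.
  apply: (W0_contra (beta := beta) h1 h2 hI).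
  have -> : evec g2 - beta *: evec g1 = lsubmx D *m Wm by rewrite hD e1 addrK.
  rewrite mulmx_sum_row; apply: W0_sum => i _; apply: W0_scale.
  rewrite rowK; have hi : nth [::] Rs i \in Rs by rewrite mem_nth.
  by have [hv hG] := hR _ hi; apply: W0_vecL.
pose v := evec g2 *m cokermx Bm.
have hv : v != 0 by rewrite /v -submxE.
have [j hj] : exists j, v 0 j != 0.
  apply: contra_notP (negP hv) => h; apply/eqP/matrixP => a b.
  rewrite (ord1 a) [RHS]mxE; case: (boolP (v 0 b == 0)) => [/eqP //|hb].
  by exfalso; apply: h; exists b.
pose c := (v 0 j)^-1 *: col j (cokermx Bm).
have hBc : Bm *m c = 0.
  by rewrite /c -scalemxAr colE mulmxA mulmx_coker mul0mx scaler0.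
rewrite mul_col_mx in hBc.
move/eqP: hBc; rewrite col_mx_eq0 => /andP [/eqP hW /eqP h1c].
exists (fun g => (evec g *m c) 0 0); split; last split.
- move=> L hL.
  have hi : (index L Rs < size Rs)%N by rewrite index_mem.
  have := congr1 (row (Ordinal hi)) hW; rewrite row_mul rowK /= nth_index // row0.
  move=> hL0; have := congr1 (fun M : 'rV[F]_1 => M 0 0) hL0; rewrite [RHS]mxE => e.
  apply: (etrans _ e).
  rewrite /vecL. rewrite mulmx_suml. rewrite summxE. apply: eq_bigr => x _. by rewrite -scalemxAl [RHS]mxE.
- by have := congr1 (fun M : 'rV[F]_1 => M 0 0) h1c; rewrite [RHS]mxE.
- rewrite /c colE -scalemxAr mulmxA -/v -colE.
  rewrite [LHS]mxE [col _ _ _ _]mxE mulVf //.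
Qed.

End Exist.
End Core.


Section Inst.
Variable K : fieldType.
Local Notation P := (pst K).
Local Notation F := {fraction {poly K}}.
Local Notation "x %:F" := (@tofrac _ x) (format "x %:F").

Definition pw (t t' : P) (k : int) : P :=
  match k with Posz n => t ^+ n | Negz n => t' ^+ n.+1 end.

Lemma pw_flip (t t' : P) k : pw t' t (- k) = pw t t' k.
Proof. by case: k => [[|n]|n]. Qed.

Inductive inst := IAddL of P & P & P | IAddR of P & P & P
  | ISclL of K & P & P | ISclR of K & P & P | IAlt of P | ICo of int & P & P.

HB.instance Definition _ := gen_eqMixin inst.

Variables (s s' : P).

Definition fv_of (i : inst) : fv K :=
  match i with
  | IAddL a a' b => fv_sub (fv_sub (fv_delta (ps_add a a') b) (fv_delta a b)) (fv_delta a' b)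
  | IAddR a b b' => fv_sub (fv_sub (fv_delta a (ps_add b b')) (fv_delta a b)) (fv_delta a b')
  | ISclL c a b => fv_sub (fv_delta (ps_scale c a) b) (fun z => c * fv_delta a b z)
  | ISclR c a b => fv_sub (fv_delta a (ps_scale c b)) (fun z => c * fv_delta a b z)
  | IAlt a => fv_delta a a
  | ICo k a b => fv_sub (fv_delta (ps_mul (pw s s' k) a) (ps_mul (pw s s' k) b)) (fv_delta a b)
  end.

Lemma rel_inst (U : set (ps K)) v : (forall u, U u -> exists k, u = pw s s' k) ->
  coinv_ext2_rel U v -> exists i, v = fv_of i.
Proof.
move=> hU [[a [a' [b ->]]]|[[a [b [b' ->]]]|[[c [a [b ->]]]|[[c [a [b ->]]]|[[a ->]|[u [a [b [hu ->]]]]]]]]].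
- by exists (IAddL a a' b).
- by exists (IAddR a b b').
- by exists (ISclL c a b).
- by exists (ISclR c a b).
- by exists (IAlt a).
- by have [k ->] := hU u hu; exists (ICo k a b).
Qed.

Lemma span_mono (Q1 Q2 : fv K -> Prop) v : (forall w, Q1 w -> Q2 w) ->
  in_span Q1 v -> in_span Q2 v.
Proof.
move=> h; elim => [|c v0 w h1 _ IH]; first exact: span0.
by apply: span_step => //; apply: h.
Qed.

Lemma span_insts (U : set (ps K)) v : (forall u, U u -> exists k, u = pw s s' k) ->
  in_span (coinv_ext2_rel U) v ->
  exists li : seq inst, in_span (fun w => exists2 i, i \in li & w = fv_of i) v.
Proof.
move=> hU; elim => [|c v0 w h1 _ [li IH]]; first by exists [::]; exact: span0.
have [i hi] := rel_inst hU h1.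
exists (i :: li); apply: span_step; first by exists i => //; rewrite mem_head.
apply: span_mono IH => w' [j hj ->]; exists j => //; by rewrite in_cons hj orbT.
Qed.

Definition series_of (i : inst) : seq P :=
  match i with
  | IAddL a a' b => [:: ps_add a a'; a; a'; b]
  | IAddR a b b' => [:: a; ps_add b b'; b; b']
  | ISclL c a b => [:: ps_scale c a; a; b]
  | ISclR c a b => [:: a; ps_scale c b; b]
  | IAlt a => [:: a]
  | ICo k a b => [:: ps_mul (pw s s' k) a; ps_mul (pw s s' k) b; a; b]
  end.

Definition crow (k : int) (x y : P) : seq ({poly K} * P) :=
  match k with
  | Posz n => [:: (1%:P, x); ((-1)%:P * 'X ^+ n, y)]
  | Negz n => [:: ('X ^+ n.+1, x); ((-1)%:P, y)]
  end.

Definition rows_of (kf : int -> int) (i : inst) : seq (seq ({poly K} * P)) :=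
  match i with
  | IAddL a a' b => [:: [:: (1%:P, ps_add a a'); ((-1)%:P, a); ((-1)%:P, a')]]
  | IAddR a b b' => [:: [:: (1%:P, ps_add b b'); ((-1)%:P, b); ((-1)%:P, b')]]
  | ISclL c a b => [:: [:: (1%:P, ps_scale c a); ((- c)%:P, a)]]
  | ISclR c a b => [:: [:: (1%:P, ps_scale c b); ((- c)%:P, b)]]
  | IAlt a => [::]
  | ICo k a b => [:: crow (kf k) (ps_mul (pw s s' k) a) a; crow (kf k) (ps_mul (pw s s' k) b) b]
  end.

Lemma crow_valid (t t' : P) k y : t * t' = 1 -> Lvalid t (crow k (pw t t' k * y) y).
Proof.
move=> htt; rewrite /Lvalid; case: k => n; rewrite /= !big_cons big_nil /=. 
  by rewrite evM !evC evXn rmorphN1 rmorph1; ring.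
rewrite evC evXn rmorphN1 addr0 mulrA -exprMn htt expr1n; ring.
Qed.

Lemma rows_valid (t t' : P) kf i L : t * t' = 1 ->
  (forall k, pw s s' k = pw t t' (kf k)) ->
  L \in rows_of kf i -> Lvalid t L /\ (forall x, x \in L -> x.2 \in series_of i).
Proof.
move=> htt hk; case: i => /=.
- move=> a a' b; rewrite inE => /eqP ->; split.
    rewrite /Lvalid !big_cons big_nil /= !evC rmorphN1 rmorph1 psE_add; ring.
  by move=> x; rewrite !inE => /or3P [] /eqP -> /=; rewrite eqxx ?orbT.
- move=> a b b'; rewrite inE => /eqP ->; split.
    rewrite /Lvalid !big_cons big_nil /= !evC rmorphN1 rmorph1 psE_add; ring.
  by move=> x; rewrite !inE => /or3P [] /eqP -> /=; rewrite eqxx ?orbT.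
- move=> c a b; rewrite inE => /eqP ->; split.
    rewrite /Lvalid !big_cons big_nil /= !evC rmorphN rmorph1 scaleE; ring.
  by move=> x; rewrite !inE => /orP [] /eqP -> /=; rewrite eqxx ?orbT.
- move=> c a b; rewrite inE => /eqP ->; split.
    rewrite /Lvalid !big_cons big_nil /= !evC rmorphN rmorph1 scaleE; ring.
  by move=> x; rewrite !inE => /orP [] /eqP -> /=; rewrite eqxx ?orbT.
- by [].
- move=> k a b; rewrite !inE => /orP [] /eqP ->; split.
  + by rewrite psE_mul hk; apply: crow_valid.
  + by move=> x; case: (kf k) => n; rewrite !inE => /orP [] /eqP -> /=; rewrite eqxx ?orbT.
  + by rewrite psE_mul hk; apply: crow_valid.
  + by move=> x; case: (kf k) => n; rewrite !inE => /orP [] /eqP -> /=; rewrite eqxx ?orbT.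
Qed.

End Inst.


Section Phi.
Variable K : fieldType.
Local Notation P := (pst K).
Local Notation F := {fraction {poly K}}.
Local Notation "x %:F" := (@tofrac _ x) (format "x %:F").

Variables (lam mu : P -> F) (G : seq P).
Definition Bf (z : P * P) : F := lam z.1 * mu z.2 - lam z.2 * mu z.1.
Definition Zs : seq (P * P) := undup [seq (a, b) | a <- G, b <- G].
Definition Phi (v : fv K) : F := \sum_(z <- Zs) ((v z)%:P)%:F * Bf z.

Lemma Phi_delta (a b : P) : a \in G -> b \in G -> Phi (fv_delta a b) = Bf (a, b).
Proof.
move=> ha hb.
have hz : (a, b) \in Zs.
  by rewrite /Zs mem_undup; apply: allpairs_f.
rewrite /Phi (bigD1_seq (a, b)) ?undup_uniq //= big1 ?addr0.
  rewrite /fv_delta; destruct (pselect _) as [e0|h]; last by exfalso; apply: h.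
  by rewrite polyC1 rmorph1 mul1r.
move=> z hz'; rewrite /fv_delta; destruct (pselect _) as [e|ne].
  by exfalso; move: hz'; rewrite -e eqxx.
by rewrite polyC0 rmorph0 mul0r.
Qed.

Lemma Phi_step c v w : Phi (fun z => c * v z + w z) = (c%:P)%:F * Phi v + Phi w.
Proof.
rewrite /Phi mulr_sumr -big_split /=; apply: eq_bigr => z _.
by rewrite polyCD polyCM !rmorphD !rmorphM /=; ring.
Qed.

Lemma Phi0 : Phi (fun _ => 0) = 0.
Proof. by rewrite /Phi big1 // => z _; rewrite polyC0 rmorph0 mul0r. Qed.

Lemma Phi_sub v w : Phi (fv_sub v w) = Phi v - Phi w.
Proof.
rewrite /Phi -sumrB; apply: eq_bigr => z _.
by rewrite /fv_sub polyCB rmorphB /=; ring.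
Qed.

Lemma Phi_scal c v : Phi (fun z => c * v z) = (c%:P)%:F * Phi v.
Proof.
rewrite /Phi mulr_sumr; apply: eq_bigr => z _.
by rewrite polyCM rmorphM /=; ring.
Qed.

Lemma Phi_span (Q : fv K -> Prop) v : (forall w, Q w -> Phi w = 0) -> in_span Q v -> Phi v = 0.
Proof.
move=> h; elim => [|c v0 w h1 _ IH]; first exact: Phi0.
by rewrite Phi_step IH h // mulr0 addr0.
Qed.

End Phi.

Section Rel.
Variable K : fieldType.
Local Notation P := (pst K).
Local Notation F := {fraction {poly K}}.
Local Notation "x %:F" := (@tofrac _ x) (format "x %:F").

Definition relk (k : int) (x y : F) : Prop :=
  match k with
  | Posz n => x = ('X%:F) ^+ n * y
  | Negz n => ('X%:F) ^+ n.+1 * x = y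
  end.

Lemma crow_rel (lam : P -> F) k (x y : P) :
  \sum_(z <- crow k x y) (z.1)%:F * lam z.2 = 0 -> relk k (lam x) (lam y).
Proof.
case: k => n; rewrite /= !big_cons big_nil /= => h; apply: subr0_eq; rewrite -h.
  by rewrite rmorphM /= rmorphXn /= polyCN polyC1 rmorphN rmorph1; ring.
by rewrite rmorphXn /= polyCN polyC1 rmorphN rmorph1; ring.
Qed.

Lemma rel_prod k (x1 y1 x2 y2 : F) : relk k x1 y1 -> relk (- k) x2 y2 -> x1 * x2 = y1 * y2.
Proof.
case: k => [[|n]|n] /=.
- by rewrite !expr0 !mul1r => -> ->.
- by move=> -> <-; ring.
- by move=> <- ->; ring.
Qed.

End Rel.


Section CoreThm.
Variable K : fieldType.
Local Notation P := (pst K).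
Local Notation F := {fraction {poly K}}.
Local Notation "x %:F" := (@tofrac _ x) (format "x %:F").

Lemma tofC1 : ((1 : K)%:P)%:F = 1 :> F.
Proof. by rewrite polyC1 rmorph1. Qed.
Lemma tofCN1 : ((-1 : K)%:P)%:F = -1 :> F.
Proof. by rewrite polyCN polyC1 rmorphN rmorph1. Qed.
Lemma tofCN (c : K) : ((- c)%:P)%:F = - (c%:P)%:F :> F.
Proof. by rewrite polyCN rmorphN. Qed.

Theorem core (s s' f : P) (U : set (ps K)) : s * s' = 1 ->
  (forall u, U u -> exists k, u = pw s s' k) -> IND s 1 f -> IND s' f 1 ->
  ~ in_span (coinv_ext2_rel U) (fv_delta f (ps_one K)).
Proof.
move=> hss hU hI1 hI2 hspan.
have [li hli] := span_insts hU hspan.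
pose G : seq P := 1 :: f :: flatten (map (series_of s s') li).
have memG : forall i x, i \in li -> x \in series_of s s' i -> x \in G.
  move=> i x hi hx; rewrite !inE; apply/orP; right; apply/orP; right.
  by apply/flattenP; exists (series_of s s' i) => //; apply: map_f.
have G1 : (1 : P) \in G by rewrite mem_head.
have Gf : f \in G by rewrite !inE eqxx orbT.
pose Rs1 := flatten (map (rows_of s s' id) li).
pose Rs2 := flatten (map (rows_of s s' (fun k => - k)) li).
have hR1 : forall L, L \in Rs1 -> Lvalid s L /\ forall x, x \in L -> x.2 \in G.
  move=> L /flattenP [L' /mapP [i hi ->] hL].
  have [hv hx] := rows_valid (t := s) (t' := s') hss (fun k => erefl) hL.
  by split => // x /hx; apply: memG.
have hss' : s' * s = 1 by rewrite mulrC.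
have hR2 : forall L, L \in Rs2 -> Lvalid s' L /\ forall x, x \in L -> x.2 \in G.
  move=> L /flattenP [L' /mapP [i hi ->] hL].
  have [hv hx] := rows_valid (t := s') (t' := s) hss' (fun k => esym (pw_flip s s' k)) hL.
  by split => // x /hx; apply: memG.
have [lam [hl [hl1 hlf]]] := exist_lam G1 Gf hR1 hI1.
have [mu [hm [hmf hm1]]] := exist_lam Gf G1 hR2 hI2.
have inR1 : forall i L, i \in li -> L \in rows_of s s' id i -> L \in Rs1.
  by move=> i L hi hL; apply/flattenP; exists (rows_of s s' id i) => //; apply: map_f.
have inR2 : forall i L, i \in li -> L \in rows_of s s' (fun k => - k) i -> L \in Rs2.
  by move=> i L hi hL; apply/flattenP; exists (rows_of s s' (fun k => - k) i) => //; apply: map_f.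
have key : forall i, i \in li -> Phi lam mu G (fv_of s s' i) = 0.
  move=> i hi; have mG := memG i _ hi.
  have hl' := fun L hL => hl L (inR1 i L hi hL).
  have hm' := fun L hL => hm L (inR2 i L hi hL).
  move: hl' hm' mG; case: i hi => [a a' b|a b b'|c a b|c a b|a|k a b] hi hl' hm' mG /=.
  - have e1 := hl' _ (mem_head _ _); have e2 := hm' _ (mem_head _ _).
    rewrite /= !big_cons !big_nil /= tofC1 tofCN1 in e1 e2.
    have E1 : lam (ps_add a a') = lam a + lam a' by apply: subr0_eq; rewrite -e1; ring.
    have E2 : mu (ps_add a a') = mu a + mu a' by apply: subr0_eq; rewrite -e2; ring.
    rewrite !Phi_sub !Phi_delta ?mG ?inE ?eqxx ?orbT // /Bf /= E1 E2; ring.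
  - have e1 := hl' _ (mem_head _ _); have e2 := hm' _ (mem_head _ _).
    rewrite /= !big_cons !big_nil /= tofC1 tofCN1 in e1 e2.
    have E1 : lam (ps_add b b') = lam b + lam b' by apply: subr0_eq; rewrite -e1; ring.
    have E2 : mu (ps_add b b') = mu b + mu b' by apply: subr0_eq; rewrite -e2; ring.
    rewrite !Phi_sub !Phi_delta ?mG ?inE ?eqxx ?orbT // /Bf /= E1 E2; ring.
  - have e1 := hl' _ (mem_head _ _); have e2 := hm' _ (mem_head _ _).
    rewrite /= !big_cons !big_nil /= tofC1 tofCN in e1 e2.
    have E1 : lam (ps_scale c a) = (c%:P)%:F * lam a by apply: subr0_eq; rewrite -e1; ring.
    have E2 : mu (ps_scale c a) = (c%:P)%:F * mu a by apply: subr0_eq; rewrite -e2; ring.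
    rewrite Phi_sub Phi_scal !Phi_delta ?mG ?inE ?eqxx ?orbT // /Bf /= E1 E2; ring.
  - have e1 := hl' _ (mem_head _ _); have e2 := hm' _ (mem_head _ _).
    rewrite /= !big_cons !big_nil /= tofC1 tofCN in e1 e2.
    have E1 : lam (ps_scale c b) = (c%:P)%:F * lam b by apply: subr0_eq; rewrite -e1; ring.
    have E2 : mu (ps_scale c b) = (c%:P)%:F * mu b by apply: subr0_eq; rewrite -e2; ring.
    rewrite Phi_sub Phi_scal !Phi_delta ?mG ?inE ?eqxx ?orbT // /Bf /= E1 E2; ring.
  - by rewrite Phi_delta ?mG ?inE ?eqxx // /Bf /= subrr.
  - have ra := crow_rel (hl' _ (mem_head _ _)).
    have hb1 : crow k (ps_mul (pw s s' k) b) b \in rows_of s s' id (ICo k a b).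
      by rewrite !inE eqxx orbT.
    have rb := crow_rel (hl' _ hb1).
    have sa := crow_rel (hm' _ (mem_head _ _)).
    have hb2 : crow (- k) (ps_mul (pw s s' k) b) b \in rows_of s s' (fun k => - k) (ICo k a b).
      by rewrite !inE eqxx orbT.
    have sb := crow_rel (hm' _ hb2).
    rewrite Phi_sub !Phi_delta ?mG ?inE ?eqxx ?orbT // /Bf /=.
    by rewrite (rel_prod ra sb) (rel_prod rb sa) subrr.
have hQ : forall w, (exists2 i, i \in li & w = fv_of s s' i) -> Phi lam mu G w = 0.
  by move=> w [i hi ->]; apply: key.
have := Phi_span hQ hli.
rewrite Phi_delta // /Bf /=.
have -> : mu (ps_one K) = 1 := hm1.
have -> : lam (ps_one K) = 0 := hl1.
rewrite hlf hmf mulr1 mul0r subr0 => /eqP.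
by rewrite oner_eq0.
Qed.

End CoreThm.


Local Open Scope classical_set_scope.
Lemma countableU T (A B : set T) : countable A -> countable B -> countable (A `|` B).
Proof.
move=> hA hB.
apply: (@sub_countable _ _ _ (\bigcup_(b in [set: bool]) (if b then A else B))).
  apply: subset_card_le => x [hx|hx]; [by exists true | by exists false].
by apply: bigcup_countable => // -[].
Qed.

Section Count.
Variable K : fieldType.
Local Notation P := (pst K).

Lemma IND_sym (t g1 g2 : P) : IND t g1 g2 -> IND t g2 g1.
Proof. by move=> h A B e; have [] := h B A; [rewrite addrC | move=> -> ->]. Qed.

Lemma notIND_count (t : P) : t 0%N = 1 -> t 1%N != 0 ->
  countable [set: {poly K} * {poly K}] -> countable [set f : ps K | ~ IND t 1 f].
Proof.
move=> t0 t1 hc.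
pose h (AB : {poly K} * {poly K}) : P :=
  xget (0 : P) [set g : P | ev t AB.1 + ev t AB.2 * g = 0].
apply: (@sub_countable _ _ _ (h @` [set: {poly K} * {poly K}])); last first.
  exact: sub_countable (card_image_le _ _) hc.
apply: subset_card_le => f /= hf.
have [A [B [e hAB]]] : exists A B, ev t A * 1 + ev t B * f = 0 /\ ~ (A = 0 /\ B = 0).
  apply: contra_notP hf => hn A B e; apply: contra_notP hn => hn'.
  by exists A, B.
rewrite mulr1 in e.
have hB : B != 0.
  apply/eqP => hB; apply: hAB; split => //.
  apply/eqP; apply: contraT => hA; have := transc t0 t1 hA.
  by rewrite -e hB ev0 mul0r addr0 eqxx.
exists (A, B) => //.
have := @xgetPex _ (0 : P) [set g : P | ev t A + ev t B * g = 0] (ex_intro _ f e).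
rewrite -/(h (A, B)) /= => e2.
apply: (ps_mulI (transc t0 t1 hB)); apply: (addrI (ev t A)).
by rewrite e2 e.
Qed.

End Count.

Local Close Scope classical_set_scope.

Local Open Scope classical_set_scope.
Section Gen.
Variable K : fieldType.
Local Notation P := (pst K).

Lemma ker_sub (s s' : P) (U : set (ps K)) f : s * s' = 1 ->
  (forall u, U u -> exists k, u = pw s s' k) ->
  in_span (coinv_ext2_rel U) (fv_delta f (ps_one K)) ->
  ~ IND s 1 f \/ ~ IND s' 1 f.
Proof.
move=> hss hU hsp.
case: (pselect (IND s 1 f)) => h1; last by left.
case: (pselect (IND s' 1 f)) => h2; last by right.
by exfalso; apply: (core hss hU h1 (IND_sym h2)).
Qed.

Lemma ker_count (s s' : P) (U : set (ps K)) : s * s' = 1 ->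
  s 0%N = 1 -> s 1%N != 0 -> s' 0%N = 1 -> s' 1%N != 0 ->
  countable [set: {poly K} * {poly K}] ->
  (forall u, U u -> exists k, u = pw s s' k) ->
  countable (theta_ker U).
Proof.
move=> hss s0 s1 s'0 s'1 hc hU.
apply: (@sub_countable _ _ _ ([set f : ps K | ~ IND s 1 f] `|` [set f : ps K | ~ IND s' 1 f])).
  by apply: subset_card_le => f hf; apply: ker_sub hss hU hf.
by apply: countableU; apply: notIND_count.
Qed.

End Gen.

Section Pcase.
Variable K : fieldType.
Local Notation P := (pst K).

Lemma onepx_mul_inv : (ps_onepx K : P) * (ps_onepx_inv K : P) = 1.
Proof.
apply: funext => -[|n].
  by rewrite coefMl big_ord_recl big_ord0 /= addr0 /ps_onepx /ps_onepx_inv /= mulr1.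
rewrite coefMl big_ord_recl big_ord_recl /= big1.
  rewrite /ps_onepx /ps_onepx_inv /= subn0 subSS subn0 !mul1r addr0 exprS mulN1r addrC subrr.
  by [].
move=> i _; rewrite /ps_onepx /=.
by rewrite mul0r.
Qed.

Lemma iter_pow (x : P) n : iter n (ps_mul x) (ps_one K) = x ^+ n.
Proof. by elim: n => [|n IH] //=; rewrite IH exprS. Qed.

Lemma pow_int_pw k : ps_pow_int K k = pw (ps_onepx K) (ps_onepx_inv K) k.
Proof. by case: k => n; rewrite /ps_pow_int /pw iter_pow. Qed.

End Pcase.

Local Close Scope classical_set_scope.

Lemma binom0 (r : rat) : binom_rat r 0 = 1.
Proof. by rewrite /binom_rat big_ord0 fact0 divr1. Qed.

Lemma binomS (r : rat) n : n.+1%:R * binom_rat r n.+1 = (r - n%:R) * binom_rat r n.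
Proof.
rewrite /binom_rat big_ord_recr /= factS natrM.
have h1 : (n.+1%:R : rat) != 0 by rewrite pnatr_eq0.
have h2 : (n`!%:R : rat) != 0 by rewrite pnatr_eq0 -lt0n fact_gt0.
by field; rewrite h2 addrC natr1 h1.
Qed.

Lemma vander_step (r r' : rat) n :
  n.+1%:R * (\sum_(i < n.+2) binom_rat r i * binom_rat r' (n.+1 - i))
  = (r + r' - n%:R) * (\sum_(i < n.+1) binom_rat r i * binom_rat r' (n - i)).
Proof.
rewrite mulr_sumr.
have split1 : forall i : 'I_n.+2, n.+1%:R * (binom_rat r i * binom_rat r' (n.+1 - i))
   = (i%:R * binom_rat r i) * binom_rat r' (n.+1 - i)
     + binom_rat r i * ((n.+1 - i)%:R * binom_rat r' (n.+1 - i)).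
  move=> i; have hi : (i <= n.+1)%N by rewrite -ltnS.
  rewrite -{1}(subnKC hi) natrD; ring.
rewrite (eq_bigr _ (fun i _ => split1 i)) big_split /=.
rewrite big_ord_recl /= mul0r mul0r add0r.
rewrite [X in _ + X = _]big_ord_recr /= subnn mul0r mulr0 addr0.
rewrite mulr_sumr -big_split /=; apply: eq_bigr => i _.
have hi : (i <= n)%N by rewrite -ltnS.
rewrite /bump /= add1n subSS.
rewrite (binomS r i) subSn // (binomS r' (n - i)) natrB //; ring.
Qed.

Lemma onepx_ratD (r r' : rat) : onepx_rat (r + r') = (onepx_rat r : pst rat) * onepx_rat r'.
Proof.
apply: funext => n; rewrite coefMl /onepx_rat.
elim: n => [|n IH].
  by rewrite big_ord_recl big_ord0 !binom0 mulr1 addr0.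
apply: (@mulfI _ (n.+1%:R)); first by rewrite pnatr_eq0.
by rewrite binomS vander_step IH.
Qed.

Lemma onepx_rat0 : onepx_rat 0 = (1 : pst rat).
Proof.
apply: funext => -[|n]; rewrite /onepx_rat; first by rewrite binom0.
rewrite /binom_rat big_ord_recl /= subrr mul0r mul0r.
by [].
Qed.


Local Open Scope classical_set_scope.
Local Notation P := (pst rat).

Definition sN (d : int) : P := onepx_rat (d%:~R^-1).
Definition s'N (d : int) : P := onepx_rat (- d%:~R^-1).
Definition UN (d : int) : set (ps rat) :=
  [set u | exists k : int, u = onepx_rat (k%:~R / d%:~R)].

Lemma sN_mul d : sN d * s'N d = 1.
Proof. by rewrite /sN /s'N -onepx_ratD addrN onepx_rat0. Qed.

Lemma pow_nat (c : rat) n : onepx_rat (n%:R * c) = (onepx_rat c : P) ^+ n.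
Proof.
elim: n => [|n IH]; first by rewrite mul0r onepx_rat0 expr0.
by rewrite -natr1 mulrDl mul1r addrC onepx_ratD IH exprS.
Qed.

Lemma UN_pw d k : onepx_rat (k%:~R / d%:~R) = pw (sN d) (s'N d) k.
Proof.
case: k => n /=.
  by rewrite /sN -pow_nat.
rewrite /s'N -pow_nat NegzE mulrNz; congr onepx_rat; rewrite mulrN mulNr.
by [].
Qed.

Lemma binom1 (r : rat) : binom_rat r 1 = r.
Proof. by rewrite /binom_rat big_ord1 /= subr0 divr1. Qed.

Lemma rel_UN v : coinv_ext2_rel (range onepx_rat) v ->
  exists d : int, 0 < d /\ coinv_ext2_rel (UN d) v.
Proof.
move=> [h|[h|[h|[h|[h|[u [a [b [hu ->]]]]]]]]]; try by exists 1; split => //; rewrite /coinv_ext2_rel; tauto.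
case: hu => r _ <-.
exists (denq r); split; first exact: denq_gt0.
right; right; right; right; right; exists (onepx_rat r), a, b; split => //.
by exists (numq r); rewrite divq_num_den.
Qed.

Lemma UN_mono d e : 0 < d -> 0 < e -> forall u, UN d u -> UN (d * e) u.
Proof.
move=> hd he u [k ->]; exists (k * e); congr onepx_rat.
rewrite !intrM; have hd' : (d%:~R : rat) != 0 by rewrite intr_eq0 gt_eqF.
have he' : (e%:~R : rat) != 0 by rewrite intr_eq0 gt_eqF.
by field; rewrite hd' he'.
Qed.

Lemma rel_mono (U U' : set (ps rat)) v : (forall u, U u -> U' u) ->
  coinv_ext2_rel U v -> coinv_ext2_rel U' v.
Proof.
move=> hU [h|[h|[h|[h|[h|[u [a [b [hu ->]]]]]]]]]; try by rewrite /coinv_ext2_rel; tauto.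
by right; right; right; right; right; exists u, a, b; split => //; apply: hU.
Qed.

Lemma span_UN v : in_span (coinv_ext2_rel (range onepx_rat)) v ->
  exists d : int, 0 < d /\ in_span (coinv_ext2_rel (UN d)) v.
Proof.
elim => [|c v0 w h1 _ [d2 [hd2 IH]]]; first by exists 1; split => //; exact: span0.
have [d1 [hd1 hr]] := rel_UN h1.
exists (d1 * d2); split; first by rewrite mulr_gt0.
apply: span_step.
  by apply: rel_mono hr; apply: UN_mono.
apply: span_mono IH => w'; apply: rel_mono => u hu.
by rewrite mulrC; apply: UN_mono.
Qed.

Theorem part1 : countable (theta_ker (range onepx_rat)).
Proof.
apply: (@sub_countable _ _ _ (\bigcup_(d in [set d : int | 0 < d])
   ([set f : ps rat | ~ IND (sN d) 1 f] `|` [set f : ps rat | ~ IND (s'N d) 1 f]))).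
  apply: subset_card_le => f hf.
  have [d [hd hsp]] := span_UN hf.
  exists d => //; apply: (ker_sub (sN_mul d) _ hsp).
  by move=> u [k ->]; exists k; apply: UN_pw.
apply: bigcup_countable => // d hd; apply: countableU; apply: notIND_count => //.
- exact: (binom0 (d%:~R^-1)).
- by change (binom_rat (d%:~R^-1) 1 != 0); rewrite binom1 invr_eq0 intr_eq0 gt_eqF.
- exact: countableP.
- exact: (binom0 (- d%:~R^-1)).
- by change (binom_rat (- d%:~R^-1) 1 != 0); rewrite binom1 oppr_eq0 invr_eq0 intr_eq0 gt_eqF.
- exact: countableP.
Qed.

Local Close Scope classical_set_scope.

Theorem part2 (p : nat) : countable (theta_ker (range (@ps_pow_int 'F_p))).
Proof.
apply: (@ker_count _ (ps_onepx 'F_p) (ps_onepx_inv 'F_p)).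
- exact: onepx_mul_inv.
- by [].
- by rewrite /ps_onepx /=.
- by rewrite /ps_onepx_inv expr0.
- by rewrite /ps_onepx_inv expr1 oppr_eq0 oner_eq0.
- exact: countableP.
- by move=> u [k _ <-]; exists k; exact: pow_int_pw.
Qed.

Theorem proposition2p1 :
  countable (theta_ker (range onepx_rat))
  /\ (forall p : nat, prime p -> odd p ->
        countable (theta_ker (range (@ps_pow_int 'F_p)))).
Proof. by split; [exact: part1 | move=> p _ _; exact: part2]. Qed.
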